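(* Let $g:\mathbb{Z}_{\ge 0}\to\mathbb{R}$ be a linearly progressing opponent process (LPOP) with switching time $\tau_0\ge 1$ (so $g(0)>0$) and constant $\alpha\in[0,1)$. Let $T\ge 1$ be an integer, let $y_{\min}\in\mathbb{R}$, and let $(y^{\mathrm{nat}}_t)_{t\ge 0}$ be an arbitrary real sequence (the natural progression). For a dosing sequence $u=(u_0,\dots,u_{T-1})$ of nonnegative reals, define the well-being sequence by $y_0=y^{\mathrm{nat}}_0$ and $$y_{t+1}=\sum_{k=0}^{t} g(k)\,u_{t-k}+y^{\mathrm{nat}}_{t+1},\qquad t=0,\dots,T-1.$$ Let $u^{\mathrm{MED}}$ be the dosing sequence in which, for each $t=0,\dots,T-1$ in turn, $u^{\mathrm{MED}}_t$ is the minimum effective dose given the previous doses $u^{\mathrm{MED}}_0,\dots,u^{\mathrm{MED}}_{t-1}$, i.e. $$u^{\mathrm{MED}}_t=\max\left\{0,\ \frac{y_{\min}-y^{\mathrm{nat}}_{t+1}-\sum_{k=1}^{t} g(k)\,u^{\mathrm{MED}}_{t-k}}{g(0)}\right\}.$$ Then the well-being sequence produced by $u^{\mathrm{MED}}$ satisfies $y_t\ge y_{\min}$ for all $t=1,\dots,T$, and for every nonnegative dosing sequence $u'=(u'_0,\dots,u'_{T-1})$ whose well-being sequence satisfies $y'_t\ge y_{\min}$ for all $t=1,\dots,T$, we have $\sum_{t=0}^{T-1}u^{\mathrm{MED}}_t\le\sum_{t=0}^{T-1}u'_t$.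
   Context: An impulse response $g:\mathbb{Z}_{\ge0}\to\mathbb{R}$ is an opponent process if there is a time $\tau_0$ with $g(\tau)>0$ for $\tau<\tau_0$ and $g(\tau)\le 0$ for $\tau\ge\tau_0$. It is a linearly progressing opponent process (LPOP) if in addition there is $\alpha\in[0,1)$ with $g(t+1)\le\alpha\,g(t)$ for all $t<\tau_0-1$ and $|g(t+1)|\ge\alpha\,|g(t)|$ for all $t\ge\tau_0$. Doses are required to be nonnegative. The minimum effective dose (MED) at time $t$ is the smallest nonnegative dose $u_t$ (given the past doses) that does not cause $y_{t+1}<y_{\min}$; equivalently it yields $y_{t+1}=y_{\min}$, or it equals $0$ when dose $0$ already yields $y_{t+1}\ge y_{\min}$. *)

(* Defs.v *)
From Stdlib Require Import Reals Lra Lia.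
Open Scope R_scope.

Definition opponent_process (g : nat -> R) (tau0 : nat) : Prop :=
  (forall tau, (tau < tau0)%nat -> 0 < g tau) /\
  (forall tau, (tau0 <= tau)%nat -> g tau <= 0).

Definition LPOP (g : nat -> R) (tau0 : nat) (alpha : R) : Prop :=
  opponent_process g tau0 /\ 0 <= alpha < 1 /\
  (forall t, (t + 1 < tau0)%nat -> g (t + 1)%nat <= alpha * g t) /\
  (forall t, (tau0 <= t)%nat -> Rabs (g (t + 1)%nat) >= alpha * Rabs (g t)).

Fixpoint rsum (a n : nat) (f : nat -> R) : R :=
  match n with
  | O => 0
  | S n' => rsum a n' f + f (a + n')%nat
  end.

Definition wellbeing (g : nat -> R) (ynat : nat -> R) (u : nat -> R) (t : nat) : R :=
  match t with
  | O => ynat O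
  | S t' => rsum 0 (S t') (fun k => g k * u (t' - k)%nat) + ynat (S t')
  end.

(* MED doses: med_prefix n is a function agreeing with u^MED on indices < n
   (and 0 elsewhere). *)
Fixpoint med_prefix (g : nat -> R) (ynat : nat -> R) (ymin : R) (n : nat)
  : nat -> R :=
  match n with
  | O => fun _ => 0
  | S t =>
      let prev := med_prefix g ynat ymin t in
      let ut := Rmax 0 ((ymin - ynat (S t)
                          - rsum 1 t (fun k => g k * prev (t - k)%nat)) / g O) in
      fun i => if Nat.eqb i t then ut else prev i
  end.

Definition med_dose (g : nat -> R) (ynat : nat -> R) (ymin : R) (t : nat) : R :=
  med_prefix g ynat ymin (S t) t.

(* Main.v *)
Require Import Defs.
From Stdlib Require Import Reals Lra Lia.
Open Scope R_scope.

Lemma rsum_first a n f : rsum a (S n) f = f a + rsum (S a) n f.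
Proof.
  induction n as [|n IH].
  - simpl. rewrite Nat.add_0_r. lra.
  - change (rsum a (S (S n)) f) with (rsum a (S n) f + f (a + S n)%nat).
    rewrite IH. simpl. replace (a + S n)%nat with (S (a + n)) by lia. lra.
Qed.

Lemma rsum_ext a n f h : (forall i, (a <= i < a + n)%nat -> f i = h i) ->
  rsum a n f = rsum a n h.
Proof.
  induction n as [|n IH]; intros H; simpl; [reflexivity|].
  rewrite IH by (intros; apply H; lia). rewrite (H (a+n)%nat) by lia. reflexivity.
Qed.

Lemma rsum_lin a n f h c1 c2 :
  rsum a n (fun i => c1 * f i + c2 * h i) = c1 * rsum a n f + c2 * rsum a n h.
Proof. induction n as [|n IH]; simpl; [lra|]. rewrite IH. lra. Qed.

Lemma rsum_shift a n f : rsum (S a) n f = rsum a n (fun i => f (S i)).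
Proof. induction n as [|n IH]; simpl; [reflexivity|]. rewrite IH. reflexivity. Qed.

Lemma rsum_le0 a n f : (forall i, (a <= i < a + n)%nat -> f i <= 0) -> rsum a n f <= 0.
Proof.
  induction n as [|n IH]; intros H; simpl; [lra|].
  assert (rsum a n f <= 0) by (apply IH; intros; apply H; lia).
  assert (f (a+n)%nat <= 0) by (apply H; lia). lra.
Qed.

Lemma rsum_ge0 a n f : (forall i, (a <= i < a + n)%nat -> 0 <= f i) -> 0 <= rsum a n f.
Proof.
  induction n as [|n IH]; intros H; simpl; [lra|].
  assert (0 <= rsum a n f) by (apply IH; intros; apply H; lia).
  assert (0 <= f (a+n)%nat) by (apply H; lia). lra.
Qed.

Lemma med_prefix_eq g ynat ymin n i : (i < n)%nat ->
  med_prefix g ynat ymin n i = med_dose g ynat ymin i.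
Proof.
  induction n as [|n IH]; intros Hi; [lia|].
  unfold med_dose. simpl.
  destruct (Nat.eqb i n) eqn:E.
  - apply Nat.eqb_eq in E. subst. simpl. rewrite Nat.eqb_refl. reflexivity.
  - apply Nat.eqb_neq in E. rewrite IH by lia. reflexivity.
Qed.

Lemma med_dose_eq g ynat ymin t :
  med_dose g ynat ymin t =
  Rmax 0 ((ymin - ynat (S t) - rsum 1 t (fun k => g k * med_dose g ynat ymin (t - k)%nat)) / g O).
Proof.
  unfold med_dose at 1. simpl. rewrite Nat.eqb_refl. f_equal. f_equal. f_equal.
  apply rsum_ext. intros i Hi. rewrite med_prefix_eq by lia. reflexivity.
Qed.

Lemma wb_S g ynat u t : wellbeing g ynat u (S t) =
  g O * u t + rsum 1 t (fun k => g k * u (t - k)%nat) + ynat (S t).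
Proof.
  unfold wellbeing. rewrite rsum_first. rewrite Nat.sub_0_r. reflexivity.
Qed.

Fixpoint Eseq (alpha : R) (d : nat -> R) (n : nat) : R :=
  match n with
  | O => d O
  | S m => alpha * Eseq alpha d m + d (S m)
  end.

Definition Em1 alpha d t := match t with O => 0 | S m => Eseq alpha d m end.

Lemma d_E alpha d t : d t = Eseq alpha d t - alpha * Em1 alpha d t.
Proof. destruct t; simpl; lra. Qed.

Lemma conv_identity g alpha d t :
  rsum 0 (S t) (fun k => g k * d (t - k)%nat) =
  g O * Eseq alpha d t + rsum 1 t (fun k => (g k - alpha * g (k - 1)%nat) * Eseq alpha d (t - k)%nat).
Proof.
  set (E := Eseq alpha d).
  transitivity (1 * rsum 0 (S t) (fun k => g k * E (t - k)%nat)
      + (- alpha) * rsum 0 (S t) (fun k => g k * Em1 alpha d (t - k)%nat)).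
  { rewrite <- rsum_lin. apply rsum_ext. intros i Hi. rewrite (d_E alpha d). unfold E. ring. }
  assert (H2 : rsum 0 (S t) (fun k => g k * Em1 alpha d (t - k)%nat)
            = rsum 0 t (fun k => g k * E (t - 1 - k)%nat)).
  { simpl. replace (t - t)%nat with O by lia. simpl. rewrite Rmult_0_r, Rplus_0_r.
    apply rsum_ext. intros i Hi. replace (t - i)%nat with (S (t - 1 - i)) by lia. reflexivity. }
  rewrite H2. rewrite rsum_first. rewrite Nat.sub_0_r.
  replace (rsum 1 t (fun k => (g k - alpha * g (k - 1)%nat) * E (t - k)%nat))
    with (1 * rsum 1 t (fun k => g k * E (t - k)%nat)
          + (- alpha) * rsum 1 t (fun k => g (k - 1)%nat * E (t - k)%nat)).
  2:{ rewrite <- rsum_lin. apply rsum_ext. intros. ring. }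
  rewrite (rsum_shift 0 t (fun k => g (k - 1)%nat * E (t - k)%nat)).
  replace (rsum 0 t (fun i => g (S i - 1)%nat * E (t - S i)%nat))
    with (rsum 0 t (fun k => g k * E (t - 1 - k)%nat)).
  2:{ apply rsum_ext. intros i Hi. replace (S i - 1)%nat with i by lia.
      replace (t - S i)%nat with (t - 1 - i)%nat by lia. reflexivity. }
  ring.
Qed.

Lemma sum_d_E alpha d n :
  rsum 0 (S n) d = Eseq alpha d n + (1 - alpha) * rsum 0 n (Eseq alpha d).
Proof.
  induction n as [|n IH].
  - simpl. lra.
  - change (rsum 0 (S (S n)) d) with (rsum 0 (S n) d + d (0 + S n)%nat).
    rewrite IH. simpl. lra.
Qed.

Theorem theorem1 (g : nat -> R) (tau0 : nat) (alpha : R) (T : nat) (ymin : R)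
  (ynat : nat -> R) :
  LPOP g tau0 alpha -> (1 <= tau0)%nat -> (1 <= T)%nat ->
  (forall t, (1 <= t <= T)%nat ->
     wellbeing g ynat (med_dose g ynat ymin) t >= ymin) /\
  (forall u' : nat -> R,
     (forall t, (t < T)%nat -> 0 <= u' t) ->
     (forall t, (1 <= t <= T)%nat -> wellbeing g ynat u' t >= ymin) ->
     rsum 0 T (med_dose g ynat ymin) <= rsum 0 T u').
Proof.
  intros [[Hpos Hneg] [Ha [Hdec Hinc]]] Htau HT.
  set (u := med_dose g ynat ymin).
  assert (g0 : 0 < g O) by (apply Hpos; lia).
  assert (Key : forall t, 0 <= u t /\ wellbeing g ynat u (S t) >= ymin /\
                 (u t = 0 \/ wellbeing g ynat u (S t) = ymin)).
  { intro t. rewrite wb_S.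
    set (A := rsum 1 t (fun k => g k * u (t - k)%nat)).
    set (c := ymin - ynat (S t) - A).
    assert (Hut : u t = Rmax 0 (c / g O)) by (unfold u at 1; rewrite med_dose_eq; reflexivity).
    rewrite Hut.
    unfold Rmax. destruct (Rle_dec 0 (c / g O)) as [H|H].
    - assert (g O * (c / g O) = c) by (field; lra). unfold c in *. lra.
    - assert (c < 0).
      { apply Rnot_le_lt in H. destruct (Rle_or_lt 0 c) as [Hc|Hc]; [|exact Hc].
        exfalso. assert (0 <= c / g O) by (apply Rmult_le_pos; [lra| left; apply Rinv_0_lt_compat; lra]). lra. }
      unfold c in *. lra. }
  split.
  { intros t Ht. destruct t as [|t]; [lia|]. apply Key. }
  intros u' Hu'0 Hu'.
  set (d := fun t => u' t - u t).
  assert (Hh : forall k, (1 <= k)%nat -> g k - alpha * g (k - 1)%nat <= 0).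
  { intros k Hk.
    destruct (Nat.lt_ge_cases k tau0) as [Hlt|Hge].
    - assert (Hx := Hdec (k - 1)%nat). replace (k - 1 + 1)%nat with k in Hx by lia.
      specialize (Hx ltac:(lia)). lra.
    - destruct (Nat.eq_dec k tau0) as [->|Hne].
      + assert (0 < g (tau0 - 1)%nat) by (apply Hpos; lia).
        assert (g tau0 <= 0) by (apply Hneg; lia).
        assert (0 <= alpha * g (tau0 - 1)%nat) by (apply Rmult_le_pos; lra). lra.
      + assert (Hx := Hinc (k - 1)%nat ltac:(lia)). replace (k - 1 + 1)%nat with k in Hx by lia.
        assert (g k <= 0) by (apply Hneg; lia).
        assert (g (k-1)%nat <= 0) by (apply Hneg; lia).
        rewrite (Rabs_left1 (g k)) in Hx by lra.
        rewrite (Rabs_left1 (g (k-1)%nat)) in Hx by lra. lra. }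
  assert (HE : forall n t, (t <= n)%nat -> (t < T)%nat -> 0 <= Eseq alpha d t).
  { induction n as [|n IHn]; intros t Htn HtT.
    - assert (t = O) by lia. subst t.
      destruct (Key O) as [Hu0 [_ [Hz|Htight]]].
      + simpl. unfold d. rewrite Hz. assert (0 <= u' O) by (apply Hu'0; lia). lra.
      + assert (Hw := Hu' 1%nat ltac:(lia)). rewrite wb_S in Hw, Htight. simpl in *.
        unfold d. simpl in Hw, Htight.
        assert (0 <= g O * (u' O - u O)) by lra.
        destruct (Rle_or_lt 0 (u' O - u O)) as [HH|HH]; [exact HH|].
        assert (g O * (u' O - u O) < 0).
        { rewrite <- (Rmult_0_r (g O)). apply Rmult_lt_compat_l; lra. } lra.
    - destruct (Nat.le_gt_cases t n) as [Hle|Hgt]; [apply IHn; lia|].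
      assert (t = S n) by lia. subst t.
      destruct (Key (S n)) as [Hu0 [_ [Hz|Htight]]].
      + simpl. assert (0 <= Eseq alpha d n) by (apply IHn; lia).
        assert (0 <= u' (S n)) by (apply Hu'0; lia).
        unfold d at 2. rewrite Hz.
        assert (0 <= alpha * Eseq alpha d n) by (apply Rmult_le_pos; lra). lra.
      + assert (Hw := Hu' (S (S n)) ltac:(lia)).
        assert (Hc : 0 <= rsum 0 (S (S n)) (fun k => g k * d (S n - k)%nat)).
        { replace (rsum 0 (S (S n)) (fun k => g k * d (S n - k)%nat)) with
            (1 * rsum 0 (S (S n)) (fun k => g k * u' (S n - k)%nat)
             + (-1) * rsum 0 (S (S n)) (fun k => g k * u (S n - k)%nat)).
          2:{ rewrite <- rsum_lin. apply rsum_ext. intros. unfold d. ring. }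
          unfold wellbeing in Hw, Htight. lra. }
        rewrite (conv_identity g alpha d) in Hc.
        assert (rsum 1 (S n) (fun k => (g k - alpha * g (k - 1)%nat) * Eseq alpha d (S n - k)%nat) <= 0).
        { apply rsum_le0. intros i Hi.
          assert (g i - alpha * g (i - 1)%nat <= 0) by (apply Hh; lia).
          assert (0 <= Eseq alpha d (S n - i)%nat) by (apply IHn; lia).
          assert (0 <= - (g i - alpha * g (i - 1)%nat) * Eseq alpha d (S n - i)%nat)
            by (apply Rmult_le_pos; lra). lra. }
        assert (0 <= g O * Eseq alpha d (S n)) by lra.
        destruct (Rle_or_lt 0 (Eseq alpha d (S n))) as [HH|HH]; [exact HH|].
        assert (g O * Eseq alpha d (S n) < 0).
        { rewrite <- (Rmult_0_r (g O)). apply Rmult_lt_compat_l; lra. } lra. }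
  destruct T as [|T']; [lia|].
  assert (Hs := sum_d_E alpha d T').
  assert (Hd : rsum 0 (S T') d = 1 * rsum 0 (S T') u' + (-1) * rsum 0 (S T') u).
  { rewrite <- rsum_lin. apply rsum_ext. intros. unfold d. ring. }
  assert (0 <= Eseq alpha d T') by (apply (HE T'); lia).
  assert (0 <= rsum 0 T' (Eseq alpha d)) by (apply rsum_ge0; intros; apply (HE i); lia).
  assert (0 <= (1 - alpha) * rsum 0 T' (Eseq alpha d)) by (apply Rmult_le_pos; lra).
  fold u. lra.
Qed.
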